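(* With the notation of the context, $\rho(C_1)$ is a self-orthogonal additive code with $\rho(C_1)^\perp=\rho(C_1^\perp)$, $|\rho(C_1)|=2^{nn_2-m(n-2k)}$, $|\rho(C_1^\perp)|=2^{nn_2+m(n-2k)}$, so it defines an $[[nn_2,m(n-2k)]]$ stabilizer quantum code $Q$ (of rate $r(1-2r')$ with $r=m/n_2$, $r'=k/n$); moreover every vector of $\rho(C_1^\perp)\setminus\rho(C_1)$ has weight at least $d_2(k+1)$. Consequently the relative minimum distance $\delta$ of $Q$ satisfies $\delta\ge \frac{d_2}{n_2}\,r'$; in particular, if $d_2/n_2\ge H_4^{-1}\!\left(\frac{1-r}{2}\right)$ then $\delta\ge r'\,H_4^{-1}\!\left(\frac{1-r}{2}\right)$.
   Context: $\mathbb{F}_4=\{0,1,\omega,\omega^2\}$, $\omega^2=\omega+1$, $\bar x=x^2$; trace inner product $\langle u,v\rangle=\sum_i(u_i\bar v_i+\bar u_iv_i)\in\mathbb{F}_2$; additive codes are $\mathbb{F}_2$-subspaces of $\mathbb{F}_4^N$, $C^\perp$ is the trace dual, self-orthogonal means $C\subseteq C^\perp$; weight = number of nonzero coordinates; an $[[N,K,D]]$ stabilizer code is given by a self-orthogonal additive $C$ with $|C|=2^{N-K}$ such that all vectors of $C^\perp\setminus C$ have weight $\ge D$; relative minimum distance is $D/N$. $H_4(x)=-x\log_4\frac x3-(1-x)\log_4(1-x)$, and $H_4^{-1}$ is the inverse of its restriction to $(0,3/4]$. Outer code (quantum Reed–Solomon code): let $m\ge2$, $n=2^m-1$, and $1\le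 k\le 2^{m-1}-1$. Let $\alpha$ be a primitive element of $\mathbb{F}_{2^m}$ and $C_{\rm RS}\subseteq\mathbb{F}_{2^m}^n$ the cyclic Reed–Solomon code with generator polynomial $\prod_{i=0}^{n-k-1}(x-\alpha^i)$ (dimension $k$); its dual $C_{\rm RS}^\perp$ (standard inner product) has dimension $n-k$ and minimum distance $k+1$, and $C_{\rm RS}\subseteq C_{\rm RS}^\perp$. Fix a self-dual basis $\mathcal B=\{b_1,\dots,b_m\}$ of $\mathbb{F}_{2^m}$ over $\mathbb{F}_2$; the binary expansion of a code $D\subseteq\mathbb{F}_{2^m}^n$ is $\mathcal B(D)=\{(c_{ij})\in\mathbb{F}_2^{nm}:(\sum_j c_{ij}b_j)_i\in D\}$. Put $C_1=\omega\mathcal B(C_{\rm RS})+\bar\omega\mathcal B(C_{\rm RS})$ and $C_1^\perp=\omega\mathcal B(C_{\rm RS}^\perp)+\bar\omega\mathcal B(C_{\rm RS}^\perp)$, additive codes in $\mathbb{F}_4^{nm}$; $C_1^\perp$ is the trace dual of $C_1$. Write vectors of $\mathbb{F}_4^{nm}$ as $(v_1,\dots,v_n)$ with blocks $v_i\in\mathbb{F}_4^m$ (block $i$ = the $m$ coordinates coming from the $i$-th Reed–Solomon position). Inner code: let $C_2\subseteq C_2^\perp\subseteq\mathbb{F}_4^{n_2}$ define an $[[n_2,m,d_2]]$ stabilizer code ($|C_2|=2^{n_2-m}$). The trace inner product induces a nondegenerate symplectic form on the $2m$-dimensional $\mathbb{F}_2$-space $C_2^\perp/C_2$ by $\langle u+C_2,v+C_2\rangle=\langle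 u,v\rangle$. Let $\rho:\mathbb{F}_4^m\to C_2^\perp/C_2$ be an $\mathbb{F}_2$-linear bijection with $\langle\rho(u),\rho(v)\rangle=\langle u,v\rangle$. For $D\in\{C_1,C_1^\perp\}$ define $\rho(D)=\{(w_1,\dots,w_n)\in(\mathbb{F}_4^{n_2})^n:\ \exists (v_1,\dots,v_n)\in D \text{ with } w_i\in\rho(v_i)\ \forall i\}$ (each $w_i$ ranges over the whole coset $\rho(v_i)$). *)

(* Defs.v *)
From HB Require Import structures.
From mathcomp Require Import all_boot all_order all_algebra all_field.
From mathcomp Require Import all_classical all_reals all_analysis.
Set Implicit Arguments. Unset Strict Implicit. Unset Printing Implicit Defensive.
Import Order.TTheory GRing.Theory Num.Theory.
Local Open Scope ring_scope.

Section Codes.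
Variable F : finFieldType. (* intended: F_4 *)

(* trace inner product, valued in the prime field {0,1} of F *)
Definition tip (a b : nat) (u v : 'M[F]_(a, b)) : F :=
  \sum_(i < a) \sum_(j < b) (u i j * (v i j) ^+ 2 + (u i j) ^+ 2 * v i j).

Definition wt (a b : nat) (u : 'M[F]_(a, b)) : nat :=
  #|[set ij : 'I_a * 'I_b | u ij.1 ij.2 != 0]|.

Definition additive_code (a b : nat) (C : {set 'M[F]_(a, b)}) : Prop :=
  0 \in C /\ forall u v, u \in C -> v \in C -> u + v \in C.

Definition tdual (a b : nat) (C : {set 'M[F]_(a, b)}) : {set 'M[F]_(a, b)} :=
  [set v : 'M[F]_(a, b) | [forall u in C, tip u v == 0]].

Definition qmindist (a b : nat) (C Cp : {set 'M[F]_(a, b)}) : nat :=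
  (\max_(d < (a * b).+1 | [forall v in Cp :\: C, (d <= wt v)%N]) d)%N.
End Codes.

Section RS.
Variable K : finFieldType. (* intended: F_{2^m} *)

(* absolute trace K -> F_2 (values in {0,1} of K) *)
Definition abstr (m : nat) (x : K) : K := \sum_(l < m) x ^+ (2 ^ l).

Definition self_dual_basis (m : nat) (b : 'I_m -> K) : Prop :=
  (forall x : K, exists c : 'I_m -> bool, x = \sum_(j < m) (c j)%:R * b j) /\
  (forall i j : 'I_m, abstr m (b i * b j) = (i == j)%:R).

Definition RSgen (n k : nat) (alpha : K) : {poly K} :=
  \prod_(i < n - k) ('X - (alpha ^+ i)%:P).

Definition RScode (n k : nat) (alpha : K) : {set 'rV[K]_n} :=
  [set v : 'rV[K]_n | RSgen n k alpha %| \sum_(i < n) v ord0 i *: 'X^i].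

Definition std_dual (n : nat) (C : {set 'rV[K]_n}) : {set 'rV[K]_n} :=
  [set w : 'rV[K]_n | [forall v in C, \sum_(i < n) v ord0 i * w ord0 i == 0]].

Definition expand (n m : nat) (b : 'I_m -> K) (c : 'M[bool]_(n, m)) : 'rV[K]_n :=
  \row_(i < n) \sum_(j < m) (c i j)%:R * b j.
End RS.

(* C_1-type code  omega B(D) + bar(omega) B(D)  in F_4^{nm}, vectors written
   as n x m matrices (row i = block i) *)
Definition omega_code (F K : finFieldType) (omega : F) (n m : nat)
  (b : 'I_m -> K) (D : {set 'rV[K]_n}) : {set 'M[F]_(n, m)} :=
  [set M : 'M[F]_(n, m) | [exists c1 : 'M[bool]_(n, m), exists c2 : 'M[bool]_(n, m),
     [&& expand b c1 \in D, expand b c2 \in D &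
         M == \matrix_(i, j) (omega * (c1 i j)%:R + omega ^+ 2 * (c2 i j)%:R)]]].

(* rho(D): rho is given by a representative map r : F_4^m -> C_2^perp, the
   coset rho(u) being r u + C_2.  Vectors of (F_4^{n2})^n are n x n2 matrices. *)
Definition rho_code (F : finFieldType) (n m n2 : nat) (C2 : {set 'rV[F]_n2})
  (r : 'rV[F]_m -> 'rV[F]_n2) (D : {set 'M[F]_(n, m)}) : {set 'M[F]_(n, n2)} :=
  [set W : 'M[F]_(n, n2) | [exists V in D, [forall i : 'I_n, row i W - r (row i V) \in C2]]].

(* r represents an F_2-linear symplectic bijection F_4^m -> C2^perp / C2 *)
Definition symplectic_rep (F : finFieldType) (m n2 : nat) (C2 : {set 'rV[F]_n2})
  (r : 'rV[F]_m -> 'rV[F]_n2) : Prop :=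
  [/\ forall u, r u \in tdual C2,
      forall u v, r (u + v) - r u - r v \in C2,
      forall u v, r u - r v \in C2 -> u = v,
      forall w, w \in tdual C2 -> exists u, w - r u \in C2 &
      forall u v, tip (r u) (r v) = tip u v].

Definition H4 (R : realType) (x : R) : R :=
  - x * (ln (x / 3) / ln 4) - (1 - x) * (ln (1 - x) / ln 4).

(* Main.v *)
Require Import Defs.
From HB Require Import structures.
From mathcomp Require Import all_boot all_order all_algebra all_field.
From mathcomp Require Import all_classical all_reals all_analysis.
From mathcomp Require Import ring lra zify.
Import Order.TTheory GRing.Theory Num.Theory.
Local Open Scope ring_scope.
Set Implicit Arguments. Unset Strict Implicit. Unset Printing Implicit Defensive.
Local Notation expand := Defs.expand.


Section Char2.
Variable R : comNzRingType.
Hypothesis two : 2%:R = 0 :> R.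

Lemma addxx_c2 (x : R) : x + x = 0.
Proof. by rewrite -mulr2n -mulr_natr two mulr0. Qed.

Lemma opp_c2 (x : R) : - x = x.
Proof. by apply/eqP; rewrite -subr_eq0 -opprD addxx_c2 oppr0. Qed.

Lemma sub_c2 (x y : R) : x - y = x + y.
Proof. by rewrite opp_c2. Qed.

Lemma sqrD_c2 (x y : R) : (x + y) ^+ 2 = x ^+ 2 + y ^+ 2.
Proof. by rewrite sqrrD -mulr_natr two mulr0 addr0. Qed.

Lemma bitD_c2 (a c : bool) : (a (+) c)%:R = a%:R + c%:R :> R.
Proof. by case: a; case: c => //=; rewrite ?addr0 ?add0r // two. Qed.

Lemma natr_odd_c2 (N : nat) : N%:R = (odd N)%:R :> R.
Proof.
by rewrite {1}(divn_eq N 2) natrD natrM two mulr0 add0r modn2.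
Qed.

Lemma bitM (a c : bool) : (a && c)%:R = a%:R * c%:R :> R.
Proof. by case: a; case: c; rewrite /= ?mulr1 ?mulr0. Qed.

Lemma bitX (a : bool) : (a%:R : R) ^+ 2 = a%:R.
Proof. by case: a; rewrite /= ?expr1n ?expr0n. Qed.
End Char2.

Lemma matrix_opp_c2 (R : comNzRingType) (two : 2%:R = 0 :> R) a c (M : 'M[R]_(a, c)) : - M = M.
Proof. by apply/matrixP => i j; rewrite mxE opp_c2. Qed.

Lemma matrix_sub_c2 (R : comNzRingType) (two : 2%:R = 0 :> R) a c (M N : 'M[R]_(a, c)) : M - N = M + N.
Proof. by rewrite (matrix_opp_c2 two). Qed.

Section Tip.
Variable F : finFieldType.
Hypothesis two : 2%:R = 0 :> F.

Lemma tipC a c (u v : 'M[F]_(a, c)) : tip u v = tip v u.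
Proof. by apply: eq_bigr => i _; apply: eq_bigr => j _; ring. Qed.

Lemma tipDl a c (u u' v : 'M[F]_(a, c)) : tip (u + u') v = tip u v + tip u' v.
Proof.
rewrite /tip -big_split /=; apply: eq_bigr => i _; rewrite -big_split /=.
apply: eq_bigr => j _; rewrite !mxE sqrD_c2 //; ring.
Qed.

Lemma tipDr a c (u v v' : 'M[F]_(a, c)) : tip u (v + v') = tip u v + tip u v'.
Proof. by rewrite tipC tipDl // !(tipC u). Qed.

Lemma tip0l a c (v : 'M[F]_(a, c)) : tip 0 v = 0.
Proof. by rewrite /tip big1 // => i _; rewrite big1 // => j _; rewrite !mxE expr0n /= !(mul0r, mulr0, addr0). Qed.

Lemma tip0r a c (v : 'M[F]_(a, c)) : tip v 0 = 0.
Proof. by rewrite tipC tip0l. Qed.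

Lemma tip_rows a c (u v : 'M[F]_(a, c)) : tip u v = \sum_(i < a) tip (row i u) (row i v).
Proof.
by apply: eq_bigr => i _; rewrite /tip big_ord1; apply: eq_bigr => j _; rewrite !mxE.
Qed.

Lemma wt_rows a c (u : 'M[F]_(a, c)) : wt u = (\sum_(i < a) wt (row i u))%N.
Proof.
rewrite /wt -sum1_card.
rewrite (eq_bigl (fun ij : 'I_a * 'I_c => u ij.1 ij.2 != 0)); last by move=> x; rewrite inE.
rewrite -(pair_big_dep xpredT (fun i j => u i j != 0) (fun _ _ => 1%N)) /=.
apply: eq_bigr => i _; rewrite -sum1_card.
rewrite (reindex (fun j : 'I_c => (ord0 : 'I_1, j))) /=; last first.
  by exists (fun ij : 'I_1 * 'I_c => ij.2) => // [[x y]] _ /=; rewrite (ord1 x).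
by apply: eq_bigl => j; rewrite inE /= mxE.
Qed.

Lemma wt_le a c (u : 'M[F]_(a, c)) : (wt u <= a * c)%N.
Proof. by apply: leq_trans (max_card _) _; rewrite card_prod !card_ord. Qed.
End Tip.


Lemma char2_card (R : finFieldType) k : #|R| = (2 ^ k)%N -> 2%:R = 0 :> R.
Proof. by move=> H; apply: pcharf0; apply: card_finPcharP H _. Qed.

Definition bxor n m (a c : 'M[bool]_(n, m)) : 'M[bool]_(n, m) :=
  \matrix_(i, j) (a i j (+) c i j).
Definition bz n m : 'M[bool]_(n, m) := const_mx false.
Definition dotb n m (a c : 'M[bool]_(n, m)) : nat :=
  (\sum_(i < n) \sum_(j < m) (a i j && c i j))%N.

Lemma dotb0r n m (a : 'M[bool]_(n, m)) : dotb a (bz n m) = 0%N.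
Proof. by rewrite /dotb big1 // => i _; rewrite big1 // => j _; rewrite mxE andbF. Qed.
Lemma dotb0l n m (a : 'M[bool]_(n, m)) : dotb (bz n m) a = 0%N.
Proof. by rewrite /dotb big1 // => i _; rewrite big1 // => j _; rewrite mxE. Qed.

Section F4.
Variables (F : finFieldType) (omega : F).
Hypothesis HF : #|F| = 4%N.
Hypothesis Homega : omega ^+ 2 = omega + 1.

Lemma two4 : 2%:R = 0 :> F.
Proof. by apply: (@char2_card F 2). Qed.

Lemma w3 : omega ^+ 3 = 1.
Proof.
rewrite exprS Homega mulrDr mulr1 -expr2 Homega addrAC addxx_c2 ?add0r //; exact: two4.
Qed.

Lemma w4 : omega ^+ 4 = omega.
Proof. by rewrite exprS w3 mulr1. Qed.

Lemma w12 : omega + omega ^+ 2 = 1.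
Proof. by rewrite Homega addrA addxx_c2 ?add0r //; exact: two4. Qed.

Lemma w_neq0 : omega != 0.
Proof.
apply/eqP=> w0; move: Homega; rewrite w0 expr0n /= add0r => /eqP; by rewrite eq_sym oner_eq0.
Qed.
Lemma w_neq1 : omega != 1.
Proof.
apply/eqP=> w1; move: Homega; rewrite w1 expr1n (addxx_c2 two4) => /eqP; by rewrite oner_eq0.
Qed.
Lemma w2_neq0 : omega ^+ 2 != 0.
Proof. by rewrite expf_neq0 // w_neq0. Qed.
Lemma w2_neqw : omega ^+ 2 != omega.
Proof.
apply/eqP; rewrite Homega => E; have : (1:F) == 0 by rewrite -(addrK omega 1) [1 + _]addrC E subrr.
by rewrite oner_eq0.
Qed.
Lemma w2_neq1 : omega ^+ 2 != 1.
Proof.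
apply/eqP; rewrite Homega => E; have : omega == 0 by rewrite -(addrK 1 omega) E subrr.
by rewrite (negbTE w_neq0).
Qed.

Definition val4 (x y : bool) : F := omega * x%:R + omega ^+ 2 * y%:R.

Lemma val4E x y : val4 x y = if x then (if y then 1 else omega) else (if y then omega ^+ 2 else 0).
Proof. by rewrite /val4; case: x; case: y; rewrite /= ?(mulr1, mulr0, addr0, add0r, w12). Qed.

Lemma val4_inj x y x' y' : val4 x y = val4 x' y' -> x = x' /\ y = y'.
Proof.
have n1 := negbTE w_neq0; have n2 := negbTE w_neq1; have n3 := negbTE w2_neq0.
have n4 := negbTE w2_neqw; have n5 := negbTE w2_neq1.
have n6 : (1 == 0 :> F) = false by rewrite oner_eq0.
rewrite !val4E; case: x; case: y; case: x'; case: y' => //= /eqP;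
rewrite ?n1 ?n2 ?n3 ?n4 ?n5 ?n6 //; rewrite eq_sym ?n1 ?n2 ?n3 ?n4 ?n5 ?n6 //.
Qed.

Definition Om n m (a c : 'M[bool]_(n, m)) : 'M[F]_(n, m) :=
  \matrix_(i, j) (omega * (a i j)%:R + omega ^+ 2 * (c i j)%:R).

Lemma Om_inj n m (a c a' c' : 'M[bool]_(n, m)) : Om a c = Om a' c' -> a = a' /\ c = c'.
Proof.
move=> E.
have H i j : a i j = a' i j /\ c i j = c' i j.
  by apply: val4_inj; have := congr1 (fun M : 'M[F]_(n, m) => M i j) E; rewrite !mxE.
by split; apply/matrixP => i j; have [] := H i j.
Qed.

Lemma Omp_bij n m : bijective (fun p : 'M[bool]_(n, m) * 'M[bool]_(n, m) => Om p.1 p.2).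
Proof.
apply: inj_card_bij.
  by move=> [a c] [a' c'] /= /Om_inj [-> ->].
by rewrite card_prod !card_mx HF card_bool -expnMn.
Qed.

Lemma Om_surj n m (M : 'M[F]_(n, m)) : exists a c, M = Om a c.
Proof.
have [g _ gK] := Omp_bij n m.
by exists (g M).1, (g M).2; rewrite gK.
Qed.

Lemma OmD n m (a c a' c' : 'M[bool]_(n, m)) : Om a c + Om a' c' = Om (bxor a a') (bxor c c').
Proof.
apply/matrixP => i j; rewrite !mxE !(bitD_c2 two4); ring.
Qed.

Lemma Om0 n m : Om (bz n m) (bz n m) = 0.
Proof. by apply/matrixP => i j; rewrite !mxE /= !mulr0 addr0. Qed.

Lemma tip_Om n m (c d a e : 'M[bool]_(n, m)) :
  tip (Om c d) (Om a e) = (dotb c e + dotb d a)%:R.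
Proof.
rewrite /tip /dotb natrD !natr_sum -big_split /=; apply: eq_bigr => i _.
rewrite !natr_sum -big_split /=; apply: eq_bigr => j _; rewrite !mxE !bitM.
set C := (c i j)%:R; set D := (d i j)%:R; set A := (a i j)%:R; set B := (e i j)%:R.
have hC : C ^+ 2 = C by apply: bitX. have hD : D ^+ 2 = D by apply: bitX.
have hA : A ^+ 2 = A by apply: bitX. have hB : B ^+ 2 = B by apply: bitX.
have s1 : (omega * A + omega ^+ 2 * B) ^+ 2 = omega ^+ 2 * A + omega * B.
  by rewrite (sqrD_c2 two4) !exprMn hA hB -exprD w4.
have s2 : (omega * C + omega ^+ 2 * D) ^+ 2 = omega ^+ 2 * C + omega * D.
  by rewrite (sqrD_c2 two4) !exprMn hC hD -exprD w4.
rewrite s1 s2.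
have -> : (omega * C + omega ^+ 2 * D) * (omega ^+ 2 * A + omega * B) +
   (omega ^+ 2 * C + omega * D) * (omega * A + omega ^+ 2 * B) =
   omega ^+ 3 * (C * A + D * B) * 2%:R + (omega ^+ 2 + omega ^+ 4) * (C * B + D * A) by ring.
by rewrite two4 mulr0 add0r w4 [omega ^+ 2 + _]addrC w12 mul1r.
Qed.
End F4.


Section Expand.
Variables (K : finFieldType) (m : nat) (b : 'I_m -> K).
Hypothesis two : 2%:R = 0 :> K.
Hypothesis Hb : self_dual_basis b.
Hypothesis m_gt0 : (0 < m)%N.

Lemma frobD l (x y : K) : (x + y) ^+ (2 ^ l) = x ^+ (2 ^ l) + y ^+ (2 ^ l).
Proof.
elim: l => [|l IH]; first by rewrite !expn0 !expr1.
by rewrite expnSr !exprM IH (sqrD_c2 two).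
Qed.

Lemma TrD (x y : K) : abstr m (x + y) = abstr m x + abstr m y.
Proof. by rewrite /abstr -big_split; apply: eq_bigr => l _; rewrite frobD. Qed.

Lemma Tr0 : abstr m (0 : K) = 0.
Proof. by rewrite /abstr big1 // => l _; rewrite expr0n expn_eq0. Qed.

Lemma Tr_sum I (r : seq I) (P : pred I) (f : I -> K) :
  abstr m (\sum_(i <- r | P i) f i) = \sum_(i <- r | P i) abstr m (f i).
Proof. exact: (big_morph _ TrD Tr0). Qed.

Lemma TrZb (c : bool) (x : K) : abstr m (c%:R * x) = c%:R * abstr m x.
Proof. by case: c; rewrite ?mul1r ?mul0r ?Tr0. Qed.

Lemma Tr_nondeg (z : K) : (forall l : K, abstr m (l * z) = 0) -> z = 0.
Proof.
move=> H; apply/eqP; apply/negPn/negP => nz.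
pose i0 : 'I_m := Ordinal m_gt0.
have := H (b i0 * b i0 / z); rewrite mulfVK // (Hb.2 i0 i0) eqxx => /eqP.
by rewrite oner_eq0.
Qed.

Lemma rearr (x y u v : K) : (x * u) * (y * v) = x * (y * (u * v)).
Proof. by ring. Qed.

Lemma expand_tr n (c d : 'M[bool]_(n, m)) :
  abstr m (\sum_(i < n) expand b c ord0 i * expand b d ord0 i) = (dotb c d)%:R.
Proof.
rewrite Tr_sum /dotb natr_sum; apply: eq_bigr => i _; rewrite !mxE.
rewrite mulr_suml Tr_sum natr_sum; apply: eq_bigr => j _.
rewrite mulr_sumr Tr_sum (bigD1 j) //= big1 ?addr0; last first.
  move=> j' nj; rewrite rearr !TrZb (Hb.2 j j').
  by rewrite eq_sym (negbTE nj) !mulr0.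
by rewrite rearr !TrZb (Hb.2 j j) eqxx mulr1 bitM.
Qed.

Lemma expand_inj n : injective (@expand K n m b).
Proof.
move=> c c' E; apply/matrixP => i j.
have := congr1 (fun v : 'rV[K]_n => abstr m (b j * v ord0 i)) E; rewrite /= !mxE.
have key (e : 'M[bool]_(n, m)) : abstr m (b j * \sum_(j' < m) (e i j')%:R * b j') = (e i j)%:R.
  rewrite mulr_sumr Tr_sum (bigD1 j) //= big1 ?addr0; last first.
    by move=> j' nj; rewrite mulrCA TrZb (Hb.2 j j') eq_sym (negbTE nj) mulr0.
  by rewrite mulrCA TrZb (Hb.2 j j) eqxx mulr1.
rewrite !key; case: (c i j); case: (c' i j) => //= /eqP; rewrite ?oner_eq0 //.
by rewrite eq_sym oner_eq0.
Qed.

Lemma expand_surj n : #|K| = (2 ^ m)%N -> forall v : 'rV[K]_n, exists c, v = expand b c.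
Proof.
move=> HK v; have [|g _ gK] := inj_card_bij (@expand_inj n).
  by rewrite !card_mx HK card_bool -expnM mul1n mulnC.
by exists (g v); rewrite gK.
Qed.

Lemma expand_xor n (c c' : 'M[bool]_(n, m)) : expand b (bxor c c') = expand b c + expand b c'.
Proof.
apply/matrixP => i0 i; rewrite !mxE -big_split /=; apply: eq_bigr => j _.
by rewrite mxE (bitD_c2 two) mulrDl.
Qed.

Lemma expand0 n : expand b (bz n m) = 0.
Proof. by apply/matrixP => i0 i; rewrite !mxE big1 // => j _; rewrite mxE mul0r. Qed.
End Expand.


Section Poly.
Variable K : finFieldType.

Definition pv N (v : 'rV[K]_N) : {poly K} := \sum_(i < N) v ord0 i *: 'X^i.
Definition rowp N (p : {poly K}) : 'rV[K]_N := \row_(i < N) p`_i.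

Lemma coef_pv_ord N (v : 'rV[K]_N) (i : 'I_N) : (pv v)`_i = v ord0 i.
Proof.
rewrite /pv coef_sum (bigD1 i) //= big1 ?addr0; first by rewrite coefZ coefXn eqxx mulr1.
move=> i' ni; rewrite coefZ coefXn; case: eqP; rewrite ?mulr0 // => E.
by case/eqP: ni; apply: val_inj.
Qed.

Lemma coef_pv_ge N (v : 'rV[K]_N) j : (N <= j)%N -> (pv v)`_j = 0.
Proof.
move=> hj; rewrite /pv coef_sum big1 // => i _; rewrite coefZ coefXn; case: eqP; rewrite ?mulr0 // => E.
by move: (ltn_ord i); rewrite -E ltnNge hj.
Qed.

Lemma size_pv N (v : 'rV[K]_N) : (size (pv v) <= N)%N.
Proof.
by apply/leq_sizeP => j hj; rewrite coef_pv_ge.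
Qed.

Lemma pv_inj N : injective (@pv N).
Proof.
move=> v v' E; apply/matrixP => i j; rewrite (ord1 i).
by rewrite -!coef_pv_ord E.
Qed.

Lemma pv_rowp N (p : {poly K}) : (size p <= N)%N -> pv (rowp N p) = p.
Proof.
move=> hs; apply/polyP => j; case: (ltnP j N) => hj.
  by rewrite (coef_pv_ord _ (Ordinal hj)) mxE.
by rewrite coef_pv_ge //; apply/esym; apply: nth_default; apply: leq_trans hs hj.
Qed.

Lemma rowp_pv N (v : 'rV[K]_N) : rowp N (pv v) = v.
Proof. by apply: pv_inj; rewrite pv_rowp // size_pv. Qed.

Lemma pvD N (v w : 'rV[K]_N) : pv (v + w) = pv v + pv w.
Proof. by rewrite /pv -big_split; apply: eq_bigr => i _; rewrite mxE scalerDl. Qed.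

Lemma pvZ N (a : K) (v : 'rV[K]_N) : pv (a *: v) = a *: pv v.
Proof. by rewrite /pv scaler_sumr; apply: eq_bigr => i _; rewrite mxE scalerA. Qed.

Lemma pv0 N : pv (0 : 'rV[K]_N) = 0.
Proof. by rewrite /pv big1 // => i _; rewrite mxE scale0r. Qed.

Lemma horner_pv N (v : 'rV[K]_N) x : (pv v).[x] = \sum_(i < N) v ord0 i * x ^+ i.
Proof.
rewrite /pv horner_sum; apply: eq_bigr => i _; by rewrite hornerZ hornerXn.
Qed.

Lemma card_dvd n d (g : {poly K}) : g != 0 -> size g = d.+1 -> (d <= n)%N ->
  #|[set v : 'rV[K]_n | g %| pv v]| = (#|K| ^ (n - d))%N.
Proof.
move=> g0 sg dn.
pose phi (q : 'rV[K]_(n - d)) : 'rV[K]_n := rowp n (g * pv q).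
have sz (q : 'rV[K]_(n - d)) : (size (g * pv q)%R <= n)%N.
  apply: leq_trans (size_mul_leq _ _) _; rewrite sg addSn /=.
  by apply: leq_trans (leq_add (leqnn d) (size_pv q)) _; rewrite subnKC.
have phiK q : pv (phi q) = g * pv q by rewrite pv_rowp.
have phi_inj : injective phi.
  move=> q q' E; apply: pv_inj; apply: (mulfI g0); by rewrite -!phiK E.
have -> : [set v : 'rV[K]_n | g %| pv v] = [set phi q | q : 'rV[K]_(n - d)].
  apply/setP => v; rewrite inE; apply/idP/imsetP.
    move=> /dvdpP [qq E].
    have sq : (size qq <= n - d)%N.
      have [->|qq0] := eqVneq qq 0; first by rewrite size_poly0.
      have := size_pv v; rewrite E size_mul // sg addnS /= => h.
      by rewrite leq_subRL // addnC.
    exists (rowp (n - d) qq) => //.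
    by rewrite /phi pv_rowp // mulrC -E rowp_pv.
  by move=> [q _ ->]; rewrite phiK dvdp_mulr.
by rewrite card_imset // card_mx mul1n.
Qed.

Lemma prod_dvdE (rs : seq K) (p : {poly K}) : uniq rs ->
  (\prod_(z <- rs) ('X - z%:P) %| p) = all (root p) rs.
Proof.
move=> u; apply/idP/idP.
  move=> /dvdpP [q ->]; apply/allP => z zr.
  by rewrite rootM; apply/orP; right; rewrite root_prod_XsubC.
move=> al; have [|q ->] := uniq_roots_prod_XsubC al; first by rewrite uniq_rootsE.
exact: dvdp_mull.
Qed.
End Poly.


Section RS.
Variables (K : finFieldType) (n k : nat) (alpha : K).
Hypothesis Ha : n.-primitive_root alpha.
Hypothesis k1 : (1 <= k)%N.
Hypothesis k2 : (2 * k < n)%N.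

Lemma n_gt0 : (0 < n)%N.
Proof. exact: prim_order_gt0 Ha. Qed.

Lemma kn : (k < n)%N.
Proof. by apply: leq_trans k2; rewrite ltnS leq_pmull. Qed.

Lemma a_neq0 : alpha != 0.
Proof.
apply/eqP=> a0; have := prim_expr_order Ha; rewrite a0 expr0n.
by rewrite eqn0Ngt n_gt0 /= => /eqP; rewrite eq_sym oner_eq0.
Qed.

Lemma pow_inj i j : (i < n)%N -> (j < n)%N -> alpha ^+ i = alpha ^+ j -> i = j.
Proof.
by move=> hi hj /eqP; rewrite (eq_prim_root_expr Ha) !modn_small // => /eqP.
Qed.

Lemma geom e : (0 < e < n)%N -> \sum_(l < n) (alpha ^+ e) ^+ l = 0.
Proof.
move=> /andP [e0 en].
have h1 : alpha ^+ e - 1 != 0.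
  rewrite subr_eq0 -(prim_order_dvd Ha); apply/negP => /(dvdn_leq e0).
  by rewrite leqNgt en.
have := subrX1 (alpha ^+ e) n; rewrite exprAC (prim_expr_order Ha) expr1n subrr.
by move/esym/eqP; rewrite mulf_eq0 (negbTE h1) /= => /eqP.
Qed.

Definition rsg := [seq alpha ^+ i | i <- index_iota 0 (n - k)].

Lemma rsg_uniq : uniq rsg.
Proof.
rewrite map_inj_in_uniq ?iota_uniq // => i j; rewrite !mem_index_iota.
move=> /andP [_ hi] /andP [_ hj].
by apply: pow_inj; [apply: leq_trans hi (leq_subr _ _) | apply: leq_trans hj (leq_subr _ _)].
Qed.

Lemma RSgenE : RSgen n k alpha = \prod_(z <- rsg) ('X - z%:P).
Proof. by rewrite /RSgen /rsg big_map big_mkord. Qed.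

Lemma inCRS v : (v \in RScode n k alpha) = all (root (pv v)) rsg.
Proof. by rewrite inE RSgenE -prod_dvdE //; exact: rsg_uniq. Qed.

Lemma inCRS_P v : reflect (forall i, (i < n - k)%N -> (pv v).[alpha ^+ i] = 0)
  (v \in RScode n k alpha).
Proof.
rewrite inCRS; apply: (iffP allP).
  by move=> H i hi; apply/eqP; apply: H; apply/mapP; exists i; rewrite // mem_index_iota.
by move=> H z /mapP [i]; rewrite mem_index_iota => /andP [_ hi] ->; apply/eqP; apply: H.
Qed.

Definition evP (P : {poly K}) : 'rV[K]_n := \row_(l < n) P.[alpha ^+ l].

Lemma swap_eval (P : {poly K}) (x : 'I_n -> K) : (size P <= k.+1)%N ->
  \sum_(l < n) evP P ord0 l * x l =
  \sum_(s < k.+1) P`_s * \sum_(l < n) x l * (alpha ^+ s) ^+ l.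
Proof.
move=> sP.
under eq_bigr => l _ do rewrite mxE (horner_coef_wide _ sP) mulr_suml.
rewrite exchange_big /=; apply: eq_bigr => s _; rewrite mulr_sumr.
by apply: eq_bigr => l _; rewrite exprAC; ring.
Qed.

Lemma evP_in (P : {poly K}) : P`_0 = 0 -> (size P <= k.+1)%N -> evP P \in RScode n k alpha.
Proof.
move=> P0 sP; apply/inCRS_P => i hi; rewrite horner_pv.
rewrite (swap_eval (fun l => (alpha ^+ i) ^+ l)) //.
rewrite big1 // => s _; case: (posnP s) => [s0|s0].
  by rewrite s0 P0 mul0r.
under eq_bigr => l _ do rewrite -exprMn -exprD.
rewrite geom ?mulr0 //; rewrite addn_gt0 s0 /=.
have : (s < k.+1)%N by []. rewrite ltnS => sk.
rewrite orbT /=; lia.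
Qed.

Lemma dual_dist w : w \in std_dual (RScode n k alpha) -> w != 0 ->
  (k < #|[set l | w ord0 l != 0%R]|)%N.
Proof.
move=> wd w0.
set S := [set l | w ord0 l != 0].
have [l0 l0S] : exists l0, l0 \in S.
  apply/set0Pn; apply/eqP => S0; case/eqP: w0.
  apply/matrixP => i j; rewrite (ord1 i) mxE; apply/eqP.
  by move: (finset.in_set0 j); rewrite -S0 inE => /negbFE.
rewrite ltnNge; apply/negP => Sk.
pose Q := \prod_(l <- enum (S :\ l0)) ('X - (alpha ^+ l)%:P).
pose P := 'X * Q.
have sQ : size Q = (#|S :\ l0|).+1 by rewrite size_prod_XsubC -cardE.
have Q0 : Q != 0 by rewrite -size_poly_gt0 sQ.
have sP : (size P <= k.+1)%N.
  rewrite /P mulrC size_mulX // sQ; move: Sk; rewrite (cardsD1 l0 S) l0S.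
  by rewrite add1n.
have P0 : P`_0 = 0 by rewrite coefXM.
have vin := evP_in P0 sP.
move: wd; rewrite inE => /forall_inP /(_ _ vin) /eqP.
rewrite (bigD1 l0) //= big1 ?addr0 => [|l nl].
  move/eqP; rewrite mulf_eq0; move: l0S; rewrite inE => /negbTE ->; rewrite orbF.
  rewrite mxE hornerM hornerX mulf_eq0 (negbTE (expf_neq0 _ a_neq0)) /=.
  apply/negP; rewrite horner_prod prodf_seq_neq0; apply/allP => l; rewrite mem_enum in_setD1.
  move=> /andP [nl _]; rewrite hornerXsubC subr_eq0; apply/negP => /eqP E.
  by case/eqP: nl; apply/val_inj/esym/(pow_inj (ltn_ord _) (ltn_ord _)).
case: (boolP (l \in S)) => lS; last first.
  by move: lS; rewrite inE negbK => /eqP ->; rewrite mulr0.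
rewrite mxE hornerM horner_prod (big_rem l) /=; last by rewrite mem_enum in_setD1 nl.
by rewrite hornerXsubC subrr mul0r mulr0 mul0r.
Qed.

Definition ev (p : 'rV[K]_k) : 'rV[K]_n := evP ('X * pv p).

Lemma size_Xpv (p : 'rV[K]_k) : (size ('X * pv p)%R <= k.+1)%N.
Proof.
apply: leq_trans (size_mul_leq _ _) _; rewrite size_polyX /=.
by rewrite ltnS size_pv.
Qed.

Lemma ev_in p : ev p \in RScode n k alpha.
Proof. by apply: evP_in; [rewrite coefXM | exact: size_Xpv]. Qed.

Lemma ev_inj : injective ev.
Proof.
move=> p p' E.
set D := 'X * pv p - 'X * pv p'.
have sD : (size D <= k.+1)%N.
  by apply: leq_trans (size_polyD _ _) _; rewrite size_polyN geq_max !size_Xpv.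
have D0 : D = 0.
  apply/eqP; apply/negPn/negP => D0.
  have := max_poly_roots D0 (rs := [seq alpha ^+ l | l <- index_iota 0 n]).
  rewrite size_map size_iota subn0 => H.
  have : (n < size D)%N.
    apply: H.
      apply/allP => z /mapP [l]; rewrite mem_index_iota => /andP [_ hl] ->.
      have := congr1 (fun v : 'rV[K]_n => v ord0 (Ordinal hl)) E; rewrite !mxE => E'.
      by rewrite /root /D hornerD hornerN E' subrr.
    rewrite map_inj_in_uniq ?iota_uniq // => i j; rewrite !mem_index_iota.
    by move=> /andP [_ hi] /andP [_ hj]; apply: pow_inj.
  by rewrite ltnNge (leq_trans sD) // kn.
apply: pv_inj; apply: (@mulfI _ 'X); first by rewrite polyX_eq0.
by apply/eqP; rewrite -subr_eq0 -/D D0.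
Qed.

Definition Eset := [set ev p | p : 'rV[K]_k].

Lemma card_CRS : #|RScode n k alpha| = (#|K| ^ k)%N.
Proof.
have sg : size (RSgen n k alpha) = (n - k).+1.
  by rewrite RSgenE size_prod_XsubC size_map size_iota subn0.
have g0 : RSgen n k alpha != 0 by rewrite -size_poly_gt0 sg.
rewrite /RScode (card_dvd g0 sg (leq_subr _ _)) subKn //.
exact: ltnW kn.
Qed.

Lemma CRS_E : RScode n k alpha = Eset.
Proof.
apply/esym/eqP; rewrite eqEcard; apply/andP; split.
  by apply/fintype.subsetP => v /imsetP [p _ ->]; apply: ev_in.
by rewrite card_CRS card_imset ?card_mx ?mul1n //; exact: ev_inj.
Qed.

Definition hs := [seq alpha ^+ t | t <- index_iota 1 k.+1].

Lemma hs_uniq : uniq hs.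
Proof.
rewrite map_inj_in_uniq ?iota_uniq // => i j; rewrite !mem_index_iota.
move=> /andP [_ hi] /andP [_ hj].
have kn' := kn.
by apply: pow_inj; [apply: leq_trans hi kn' | apply: leq_trans hj kn'].
Qed.

Definition Hset := [set w : 'rV[K]_n | \prod_(z <- hs) ('X - z%:P) %| pv w].

Lemma inH_P w : reflect (forall t, (1 <= t <= k)%N -> (pv w).[alpha ^+ t] = 0) (w \in Hset).
Proof.
rewrite inE prod_dvdE; last exact: hs_uniq.
apply: (iffP allP).
  by move=> H t ht; apply/eqP; apply: H; apply/mapP; exists t; rewrite // mem_index_iota ltnS.
by move=> H z /mapP [t]; rewrite mem_index_iota ltnS => ht ->; apply/eqP; apply: H.
Qed.

Lemma card_H : #|Hset| = (#|K| ^ (n - k))%N.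
Proof.
have sh : size (\prod_(z <- hs) ('X - z%:P)) = k.+1.
  by rewrite size_prod_XsubC size_map size_iota subSS subn0.
have h0 : \prod_(z <- hs) ('X - z%:P) != 0 by rewrite -size_poly_gt0 sh.
exact: (card_dvd h0 sh (ltnW kn)).
Qed.

Lemma dualE : std_dual (RScode n k alpha) = Hset.
Proof.
apply/setP => w; apply/idP/idP.
  rewrite inE => /forall_inP H; apply/inH_P => t /andP [t1 tk].
  have P0 : ('X^t : {poly K})`_0 = 0 by rewrite coefXn; case: (t) t1.
  have sP : (size ('X^t : {poly K}) <= k.+1)%N by rewrite size_polyXn ltnS.
  have /eqP := H _ (evP_in P0 sP).
  under eq_bigr => l _ do rewrite mxE hornerXn -exprM mulnC exprM mulrC.
  by rewrite -horner_pv.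
move=> /inH_P Hw; rewrite inE; apply/forall_inP => v; rewrite CRS_E => /imsetP [p _ ->].
rewrite (swap_eval (fun l => w ord0 l)) ?size_Xpv //.
rewrite big1 // => s _; case: (posnP s) => [s0|s0].
  by rewrite s0 coefXM eqxx mul0r.
rewrite -horner_pv Hw ?mulr0 // s0 /=.
by rewrite -ltnS.
Qed.

Lemma CRS_selforth : RScode n k alpha \subset std_dual (RScode n k alpha).
Proof.
rewrite dualE; apply/fintype.subsetP => v /inCRS_P Hv; apply/inH_P => t /andP [t1 tk].
apply: Hv; lia.
Qed.
End RS.


Lemma natr_eq0_c2 (R : comNzRingType) (two : 2%:R = 0 :> R) N : (N%:R == 0 :> R) = ~~ odd N.
Proof. by rewrite (natr_odd_c2 two); case: (odd N); rewrite /= ?oner_eq0 ?eqxx. Qed.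

Section Omega.
Variables (F : finFieldType) (omega : F).
Hypothesis HF : #|F| = 4%N.
Hypothesis Homega : omega ^+ 2 = omega + 1.
Variables (K : finFieldType) (m : nat) (b : 'I_m -> K).
Hypothesis Hb : self_dual_basis b.
Hypothesis m_gt0 : (0 < m)%N.
Hypothesis HK : #|K| = (2 ^ m)%N.
Variable n : nat.

Let twoF : 2%:R = 0 :> F := two4 HF.
Let twoK : 2%:R = 0 :> K := char2_card HK.

Lemma omega_codeP (D : {set 'rV[K]_n}) M :
  reflect (exists a c, [/\ expand b a \in D, expand b c \in D & M = Om omega a c])
    (M \in omega_code omega b D).
Proof.
rewrite inE; apply: (iffP existsP).
  by move=> [a /existsP [c /and3P [h1 h2 /eqP h3]]]; exists a, c.
by move=> [a [c [h1 h2 h3]]]; exists a; apply/existsP; exists c; rewrite h1 h2 h3 eqxx.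
Qed.

Lemma card_B (D : {set 'rV[K]_n}) : #|[set c : 'M[bool]_(n, m) | expand b c \in D]| = #|D|.
Proof.
set B := [set c : 'M[bool]_(n, m) | expand b c \in D].
have E : [set expand b c | c in B] = D.
  apply/setP => v; apply/imsetP/idP.
    by move=> [c]; rewrite inE => h ->.
  by have [c ->] := expand_surj twoK Hb HK v => vD; exists c; rewrite // inE.
rewrite -[in RHS]E card_imset //; exact: (expand_inj twoK Hb).
Qed.

Lemma card_omega (D : {set 'rV[K]_n}) : #|omega_code omega b D| = (#|D| * #|D|)%N.
Proof.
set B := [set c : 'M[bool]_(n, m) | expand b c \in D].
have -> : omega_code omega b D = [set Om omega p.1 p.2 | p in finset.setX B B].
  apply/setP => M; apply/omega_codeP/imsetP.
    by move=> [a [c [h1 h2 ->]]]; exists (a, c) => //; rewrite finset.in_setX !inE h1 h2.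
  by move=> [[a c]]; rewrite finset.in_setX !inE /= => /andP [h1 h2] ->; exists a, c.
rewrite card_imset; first by rewrite cardsX !card_B.
by move=> [a c] [a' c'] /= /(Om_inj HF Homega) [-> ->].
Qed.

Lemma omega_code_add (D : {set 'rV[K]_n}) : 0 \in D ->
  (forall u v, u \in D -> v \in D -> u + v \in D) -> additive_code (omega_code omega b D).
Proof.
move=> D0 DD; split.
  by apply/omega_codeP; exists (bz n m), (bz n m); rewrite Om0 (expand0 b) D0.
move=> u v /omega_codeP [a [c [h1 h2 ->]]] /omega_codeP [a' [c' [h1' h2' ->]]].
apply/omega_codeP; exists (bxor a a'), (bxor c c'); rewrite (OmD omega HF).
by rewrite !(expand_xor _ twoK) !DD.
Qed.

Lemma omega_code_sub (D D' : {set 'rV[K]_n}) : D \subset D' ->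
  omega_code omega b D \subset omega_code omega b D'.
Proof.
move=> /fintype.subsetP sD; apply/fintype.subsetP => M /omega_codeP [a [c [h1 h2 ->]]].
by apply/omega_codeP; exists a, c; rewrite !sD.
Qed.

Lemma K1 (D : {set 'rV[K]_n}) c d : expand b c \in D -> expand b d \in std_dual D ->
  (dotb c d)%:R = 0 :> F.
Proof.
move=> hc; rewrite inE => /forall_inP /(_ _ hc) /eqP H.
have := expand_tr twoK Hb c d; rewrite H (Tr0 K m) => /esym/eqP.
by rewrite (natr_eq0_c2 twoK) -(natr_eq0_c2 twoF) => /eqP.
Qed.

Lemma K2 (D : {set 'rV[K]_n}) d :
  (forall a (v : 'rV[K]_n), v \in D -> a *: v \in D) ->
  (forall c, expand b c \in D -> (dotb c d)%:R = 0 :> F) -> expand b d \in std_dual D.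
Proof.
move=> DZ H; rewrite inE; apply/forall_inP => v vD; apply/eqP; apply: (Tr_nondeg Hb m_gt0) => l.
have [c hc] := expand_surj twoK Hb HK (l *: v).
have := H c; rewrite -hc DZ // => /(_ isT) /eqP; rewrite (natr_eq0_c2 twoF) -(natr_eq0_c2 twoK).
rewrite -(expand_tr twoK Hb) -hc => /eqP E; rewrite -[RHS]E; congr abstr.
by rewrite mulr_sumr; apply: eq_bigr => i _; rewrite !mxE mulrA.
Qed.

Lemma tdual_omega (D : {set 'rV[K]_n}) : 0 \in D ->
  (forall a (v : 'rV[K]_n), v \in D -> a *: v \in D) ->
  tdual (omega_code omega b D) = omega_code omega b (std_dual D).
Proof.
move=> D0 DZ; apply/setP => M; have [a [e ->]] := Om_surj HF Homega M.
apply/idP/idP.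
  rewrite inE => /forall_inP H; apply/omega_codeP; exists a, e; split => //.
    apply: K2 => // d hd.
    have := H (Om omega (bz n m) d); rewrite (tip_Om HF Homega) dotb0l add0n => /(_ _) /eqP.
    apply; apply/omega_codeP; exists (bz n m), d; by rewrite (expand0 b).
  apply: K2 => // c hc.
  have := H (Om omega c (bz n m)); rewrite (tip_Om HF Homega) dotb0l addn0 => /(_ _) /eqP.
  apply; apply/omega_codeP; exists c, (bz n m); by rewrite (expand0 b).
move=> /omega_codeP [a' [e' [ha he /Om_inj E]]]; have [Ea Ee] := E HF Homega.
rewrite inE; apply/forall_inP => U /omega_codeP [c [d [hc hd ->]]].
rewrite (tip_Om HF Homega) natrD (K1 hc) ?(K1 hd) ?addr0 //.
  by rewrite Ea.
by rewrite Ee.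
Qed.
End Omega.


Lemma rowD_ (R : nmodType) a c (i : 'I_a) (A B : 'M[R]_(a, c)) : row i (A + B) = row i A + row i B.
Proof. by apply/rowP => j; rewrite !mxE. Qed.
Lemma rowB_ (R : zmodType) a c (i : 'I_a) (A B : 'M[R]_(a, c)) : row i (A - B) = row i A - row i B.
Proof. by apply/rowP => j; rewrite !mxE. Qed.

Lemma swap_eq (V : zmodType) (a b a' b' : V) : a + b = a' + b' -> a - a' = b' - b.
Proof. by move=> E; rewrite -(addrK b a) E addrAC [a' + b']addrC addrK. Qed.

Section Rho.
Variables (F : finFieldType) (m n2 : nat) (C2 : {set 'rV[F]_n2}) (r : 'rV[F]_m -> 'rV[F]_n2).
Hypothesis two : 2%:R = 0 :> F.
Hypothesis HC2add : additive_code C2.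
Hypothesis HC2so : C2 \subset tdual C2.
Hypothesis Hr : symplectic_rep C2 r.
Variable n : nat.

Definition Rm (V : 'M[F]_(n, m)) : 'M[F]_(n, n2) := \matrix_(i < n) r (row i V).
Definition CC := [set W : 'M[F]_(n, n2) | [forall i, row i W \in C2]].

Lemma C2_0 : 0 \in C2. Proof. exact: HC2add.1. Qed.
Lemma C2D x y : x \in C2 -> y \in C2 -> x + y \in C2. Proof. exact: HC2add.2. Qed.
Lemma C2B x y : x \in C2 -> y \in C2 -> x - y \in C2.
Proof. by rewrite (matrix_sub_c2 two); apply: C2D. Qed.

Lemma r0 : r 0 \in C2.
Proof.
have [_ H _ _ _] := Hr; have := H 0 0.
by rewrite addr0 subrr sub0r (matrix_opp_c2 two).
Qed.

Lemma tdualD x y : x \in tdual C2 -> y \in tdual C2 -> x + y \in tdual C2.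
Proof.
rewrite !inE => /forall_inP hx /forall_inP hy; apply/forall_inP => u uC.
by rewrite tipDr // (eqP (hx _ uC)) (eqP (hy _ uC)) addr0.
Qed.

Lemma row_Rm i V : row i (Rm V) = r (row i V).
Proof. by rewrite rowK. Qed.

Lemma CC0 : 0 \in CC.
Proof. by rewrite inE; apply/forallP => i; rewrite row0 C2_0. Qed.

Lemma rho_codeE (D : {set 'M[F]_(n, m)}) :
  rho_code C2 r D = [set Rm p.1 + p.2 | p in finset.setX D CC].
Proof.
apply/setP => W; rewrite inE; apply/exists_inP/imsetP.
  move=> [V VD /forallP H]; exists (V, W - Rm V); last by rewrite /= addrC subrK.
  rewrite finset.in_setX VD inE /=; apply/forallP => i.
  by rewrite rowB_ row_Rm H.
move=> [[V c]]; rewrite finset.in_setX inE /= => /andP [VD /forallP H] ->.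
exists V => //; apply/forallP => i.
by rewrite rowD_ row_Rm addrAC subrr add0r H.
Qed.

Lemma Phi_inj (D : {set 'M[F]_(n, m)}) :
  {in finset.setX D CC &, injective (fun p : 'M[F]_(n, m) * 'M[F]_(n, n2) => Rm p.1 + p.2)}.
Proof.
move=> [V c] [V' c']; rewrite !finset.in_setX !inE /= => /andP [_ /forallP hc] /andP [_ /forallP hc'] E.
have EV : V = V'.
  apply/row_matrixP => i; have [_ _ Hinj _ _] := Hr; apply: Hinj.
  have := congr1 (row i) E; rewrite !rowD_ !row_Rm => E'.
  rewrite (swap_eq E').
  by apply: C2B.
by move: E; rewrite EV => /addrI ->.
Qed.

Lemma card_CC : #|CC| = (#|C2| ^ n)%N.
Proof.
have -> : CC = [set \matrix_(i < n) f i | f : {ffun 'I_n -> 'rV[F]_n2} in ffun_on (mem C2)].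
  apply/setP => W; rewrite inE; apply/forallP/imsetP.
    move=> H; exists [ffun i => row i W].
      by apply/ffun_onP => i; rewrite ffunE H.
    by apply/row_matrixP => i; rewrite rowK ffunE.
  by move=> [f /ffun_onP H ->] i; rewrite rowK H.
rewrite card_imset ?card_ffun_on ?card_ord //.
by move=> f f' E; apply/ffunP => i; have := congr1 (row i) E; rewrite !rowK.
Qed.

Lemma card_rho (D : {set 'M[F]_(n, m)}) : #|rho_code C2 r D| = (#|D| * #|C2| ^ n)%N.
Proof.
by rewrite rho_codeE card_in_imset ?cardsX ?card_CC //; apply: Phi_inj.
Qed.

Lemma rho_add (D : {set 'M[F]_(n, m)}) : additive_code D -> additive_code (rho_code C2 r D).
Proof.
move=> [D0 DD]; split.
  rewrite inE; apply/exists_inP; exists 0 => //; apply/forallP => i.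
  by rewrite row0 sub0r (matrix_opp_c2 two) row0; exact: r0.
move=> W W'; rewrite !inE => /exists_inP [V VD /forallP H] /exists_inP [V' VD' /forallP H'].
apply/exists_inP; exists (V + V'); first by apply: DD.
apply/forallP => i; have [_ Hadd _ _ _] := Hr.
have -> : row i (W + W') - r (row i (V + V')) =
   (row i W - r (row i V)) + (row i W' - r (row i V')) +
   (r (row i V + row i V') - r (row i V) - r (row i V')).
  rewrite rowD_ rowD_ !(matrix_sub_c2 two); apply/rowP => j; rewrite !mxE.
  set y1 := (r (row i V)) 0 j.
  set y2 := (r (row i V')) 0 j. set z := (r (row i V + row i V')) 0 j.
  have -> : W i j + y1 + (W' i j + y2) + (z + y1 + y2) = W i j + W' i j + z + 2%:R * (y1 + y2) by ring.
  by rewrite two mul0r addr0.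
by apply: C2D; [apply: C2D; [apply: H | apply: H'] | apply: Hadd].
Qed.

Lemma tip_rho V V' c c' : c \in CC -> c' \in CC -> tip (Rm V + c) (Rm V' + c') = tip V V'.
Proof.
rewrite !inE => /forallP hc /forallP hc'.
rewrite tip_rows (tip_rows V); apply: eq_bigr => i _.
rewrite !rowD_ !row_Rm !tipDl // !tipDr //.
have [Hd _ _ _ Hsym] := Hr.
have t1 : tip (r (row i V)) (row i c') = 0.
  by rewrite tipC //; move: (Hd (row i V')) (Hd (row i V)); rewrite !inE => _ /forall_inP /(_ _ (hc' i)) /eqP.
have t2 : tip (row i c) (r (row i V')) = 0.
  by move: (Hd (row i V')); rewrite inE => /forall_inP /(_ _ (hc i)) /eqP.
have t3 : tip (row i c) (row i c') = 0.
  by move: HC2so => /fintype.subsetP /(_ _ (hc' i)); rewrite inE => /forall_inP /(_ _ (hc i)) /eqP.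
by rewrite t1 t2 t3 Hsym !addr0.
Qed.

Lemma tdual_rho (D Dp : {set 'M[F]_(n, m)}) : 0 \in D -> tdual D = Dp ->
  tdual (rho_code C2 r D) = rho_code C2 r Dp.
Proof.
move=> D0 Ed; apply/setP => W; apply/idP/idP; last first.
  rewrite rho_codeE => /imsetP [[V c]]; rewrite finset.in_setX /= => /andP [VDp cC] ->.
  rewrite inE; apply/forall_inP => U; rewrite rho_codeE => /imsetP [[V' c']].
  rewrite finset.in_setX /= => /andP [V'D c'C] ->.
  by rewrite tip_rho //; move: VDp; rewrite -Ed inE => /forall_inP /(_ _ V'D).
rewrite inE => /forall_inP HW.
have inQ V c : V \in D -> c \in CC -> Rm V + c \in rho_code C2 r D.
  by move=> VD cC; rewrite rho_codeE; apply/imsetP; exists (V, c); rewrite // finset.in_setX VD cC.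
have rowsW i : row i W \in tdual C2.
  rewrite inE; apply/forall_inP => x xC.
  pose e : 'M[F]_(n, n2) := \matrix_(i' < n) (if i' == i then x else 0).
  have eC : e \in CC.
    by rewrite inE; apply/forallP => i'; rewrite rowK; case: eqP => _; [exact: xC | exact: C2_0].
  have /eqP h1 := HW _ (inQ 0 e D0 eC).
  have /eqP h0 := HW _ (inQ 0 0 D0 CC0).
  rewrite addr0 in h0; rewrite tipDl // h0 add0r tip_rows in h1.
  rewrite (bigD1 i) //= big1 ?addr0 in h1; last first.
    by move=> i' ni; rewrite rowK (negbTE ni) tip0l.
  by rewrite rowK eqxx in h1; rewrite h1.
have Hsurj i : exists u, row i W - r u \in C2.
  by have [_ _ _ Hs _] := Hr; apply: Hs.
pose V : 'M[F]_(n, m) := \matrix_(i < n) odflt 0 [pick u | row i W - r u \in C2].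
have HV i : row i W - r (row i V) \in C2.
  rewrite rowK; case: pickP => [u //|H]; have [u hu] := Hsurj i; by rewrite H in hu.
have WC : W - Rm V \in CC by rewrite inE; apply/forallP => i; rewrite rowB_ row_Rm HV.
have EW : W = Rm V + (W - Rm V) by rewrite addrC subrK.
have VDp : V \in Dp.
  rewrite -Ed inE; apply/forall_inP => V' V'D.
  have := HW _ (inQ V' 0 V'D CC0).
  by rewrite [in X in tip _ X]EW tip_rho // CC0.
rewrite rho_codeE; apply/imsetP; exists (V, W - Rm V) => //.
by rewrite finset.in_setX VDp WC.
Qed.
End Rho.


Unset Implicit Arguments.
Theorem lemma3
  (F : finFieldType) (omega : F)
  (HF : #|F| = 4%N) (Homega : omega ^+ 2 = omega + 1)
  (K : finFieldType) (m k : nat) (alpha : K) (b : 'I_m -> K)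
  (Hm : (2 <= m)%N) (HK : #|K| = (2 ^ m)%N)
  (Hk1 : (1 <= k)%N) (Hk2 : (k <= 2 ^ m.-1 - 1)%N)
  (Halpha : (2 ^ m - 1)%N.-primitive_root alpha)
  (Hb : self_dual_basis b)
  (n2 d2 : nat) (C2 : {set 'rV[F]_n2}) (r : 'rV[F]_m -> 'rV[F]_n2)
  (HC2add : additive_code C2) (HC2so : C2 \subset tdual C2)
  (HC2card : (#|C2| * 2 ^ m = 2 ^ n2)%N)
  (HC2dist : forall v, v \in tdual C2 :\: C2 -> (d2 <= wt v)%N)
  (Hr : symplectic_rep C2 r) :
  let n := (2 ^ m - 1)%N in
  let CRS := RScode n k alpha in
  let C1 := omega_code omega b CRS in
  let C1p := omega_code omega b (std_dual CRS) in
  let Q := rho_code C2 r C1 in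
  let Qp := rho_code C2 r C1p in
  additive_code Q /\ Q \subset tdual Q /\ tdual Q = Qp /\
  #|Q| = (2 ^ (n * n2 - m * (n - 2 * k)))%N /\
  #|Qp| = (2 ^ (n * n2 + m * (n - 2 * k)))%N /\
  (forall v, v \in Qp :\: Q -> (d2 * (k + 1) <= wt v)%N) /\
  (forall R : realType,
        let rr : R := m%:R / n2%:R in
        let rr' : R := k%:R / n%:R in
        let delta : R := (qmindist Q Qp)%:R / (n * n2)%:R in
        [/\ (m * (n - 2 * k))%:R / (n * n2)%:R = rr * (1 - 2 * rr'),
            delta >= d2%:R / n2%:R * rr' &
            forall h : R, 0 < h -> h <= 3 / 4 -> H4 h = (1 - rr) / 2 ->
              d2%:R / n2%:R >= h -> delta >= rr' * h]).
Proof.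
move=> n CRS C1 C1p Q Qp.
have twoF : 2%:R = 0 :> F := two4 HF.
have twoK : 2%:R = 0 :> K := char2_card HK.
have m_gt0 : (0 < m)%N by apply: leq_trans Hm.
have hk : (2 * k < n)%N.
  have e : (2 ^ m = 2 * 2 ^ m.-1)%N by rewrite -expnS prednK.
  have p0 : (0 < 2 ^ m.-1)%N by rewrite expn_gt0.
  rewrite /n e; lia.
have inC v : (v \in CRS) = (RSgen n k alpha %| pv v) by rewrite inE.
have CRS0 : (0 : 'rV[K]_n) \in CRS by rewrite inC pv0 dvdp0.
have CRSD u v : u \in CRS -> v \in CRS -> u + v \in CRS.
  by rewrite !inC pvD; apply: dvdp_add.
have CRSZ a v : v \in CRS -> a *: v \in CRS.
  by rewrite !inC pvZ -mul_polyC; apply: dvdp_mull.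
have C1add : additive_code C1 := @omega_code_add _ omega HF _ _ b HK _ _ CRS0 CRSD.
have tC1 : tdual C1 = C1p := @tdual_omega _ omega HF Homega _ _ b Hb m_gt0 HK _ _ CRS0 CRSZ.
have C1sub : C1 \subset C1p := @omega_code_sub _ omega _ _ b _ _ _ (CRS_selforth Halpha Hk1 hk).
have tQ : tdual Q = Qp := tdual_rho twoF HC2add HC2so Hr C1add.1 tC1.
have QQp : Q \subset Qp.
  apply/fintype.subsetP => W; rewrite !inE => /exists_inP [V VC H].
  by apply/exists_inP; exists V => //; apply: (fintype.subsetP C1sub).
have C2pos : (0 < #|C2|)%N by apply/card_gt0P; exists 0; exact: HC2add.1.
have mn2 : (m <= n2)%N.
  rewrite -(@leq_exp2l 2) // -HC2card; apply: leq_pmull C2pos.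
have cC2 : #|C2| = (2 ^ (n2 - m))%N.
  apply/eqP; rewrite -(eqn_pmul2r (expn_gt0 2 m)) HC2card -expnD subnK //.
have cQ : #|Q| = (2 ^ (n * n2 - m * (n - 2 * k)))%N.
  rewrite card_rho // card_omega // card_CRS // HK cC2 -!expnM -!expnD.
  congr (2 ^ _)%N; nia.
have cQp : #|Qp| = (2 ^ (n * n2 + m * (n - 2 * k)))%N.
  rewrite card_rho // card_omega // dualE // card_H // HK cC2 -!expnM -!expnD.
  congr (2 ^ _)%N; nia.
have dist v : v \in Qp :\: Q -> (d2 * (k + 1) <= wt v)%N.
  rewrite finset.in_setD => /andP [vQ]; rewrite {1}/Qp rho_codeE => /imsetP [[V c]].
  rewrite finset.in_setX /= => /andP [VC1p cC] Ev.
  have V0 : V != 0.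
    apply/eqP => V0; case/negP: vQ; rewrite /Q rho_codeE; apply/imsetP; exists (V, c) => //.
    by rewrite finset.in_setX cC andbT V0; exact: C1add.1.
  move: VC1p => /omega_codeP [a [e [ha he EV]]].
  have Hrow l : row l V = 0 -> (forall j, a l j = false /\ e l j = false).
    move=> R0 j; have := congr1 (fun M : 'rV[F]_m => M 0 j) R0; rewrite !mxE EV mxE.
    move=> h; have := @val4_inj _ omega HF Homega (a l j) (e l j) false false.
    by rewrite /val4 /= !mulr0 addr0 => /(_ h) [-> ->].
  have Hexp (x : 'M[bool]_(n, m)) l : (forall j, x l j = false) -> expand b x 0 l = 0.
    by move=> H; rewrite mxE big1 // => j _; rewrite H mul0r.
  have [a' [ha' nz rnz]] : exists a', [/\ expand b a' \in std_dual CRS, expand b a' != 0 &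
      forall l, expand b a' 0 l != 0 -> row l V != 0].
    case: (eqVneq (expand b a) 0) => [a0|anz]; last first.
      exists a; split => // l; apply: contra_neq => /Hrow H; apply: Hexp => j; have [] := H j.
      by [].
    case: (eqVneq (expand b e) 0) => [e0|enz]; last first.
      exists e; split => // l; apply: contra_neq => /Hrow H; apply: Hexp => j; have [] := H j.
      by [].
    case/eqP: V0; rewrite EV.
    have -> : a = bz n m by apply: (expand_inj twoK Hb); rewrite a0 expand0.
    have -> : e = bz n m by apply: (expand_inj twoK Hb); rewrite e0 expand0.
    exact: Om0.
  set S := [set l | expand b a' ord0 l != 0].
  have kS : (k < #|S|)%N := dual_dist Halpha Hk1 hk ha' nz.
  have wl l : l \in S -> (d2 <= wt (row l v))%N.
    rewrite inE => /rnz Vl; apply: HC2dist; rewrite finset.in_setD.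
    have erow : row l v = r (row l V) + row l c by rewrite Ev rowD_ row_Rm.
    have cl : row l c \in C2 by move: cC; rewrite inE => /forallP.
    have [Hd _ Hinj _ _] := Hr.
    apply/andP; split.
      apply/negP => hin; case/eqP: Vl.
      apply: Hinj.
      have -> : r (row l V) = row l v - row l c by rewrite erow addrK.
      apply: C2B => //; first by apply: C2B.
      exact: r0.
    rewrite erow; apply: tdualD => //; exact: (fintype.subsetP HC2so).
  rewrite wt_rows (bigID (fun l => l \in S)) /=.
  apply: leq_trans (leq_addr _ _).
  have := @leq_sum _ (index_enum 'I_n) (fun l => l \in S) (fun _ => d2) (fun l => wt (row l v)) wl. move=> Hs; apply: leq_trans Hs; rewrite sum_nat_const mulnC.
  by rewrite leq_mul2r addn1 kS orbT.
have Xpos : (0 < m * (n - 2 * k))%N by rewrite muln_gt0 m_gt0 subn_gt0.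
have [v0 hv0] : exists v, v \in Qp :\: Q.
  apply/finset.set0Pn; rewrite finset.setD_eq0; apply/negP => sub.
  have := subset_leq_card sub; rewrite cQ cQp leq_exp2l //; lia.
have qmin : (d2 * (k + 1) <= qmindist Q Qp)%N.
  have le : (d2 * (k + 1) < (n * n2).+1)%N by rewrite ltnS (leq_trans (dist _ hv0)) // wt_le.
  apply: leq_trans (leq_bigmax_cond (F := fun d : 'I_(n * n2).+1 => nat_of_ord d) (Ordinal le) _) => //.
  by apply/forall_inP => v hv; exact: dist v hv.
split; first exact: rho_add.
split; first by rewrite tQ.
split; first exact: tQ.
split; first exact: cQ.
split; first exact: cQp.
split; first exact: dist.
move=> R rr rr' delta.
have n_gt0 : (0 < n)%N by apply: leq_ltn_trans hk.
have n2_gt0 : (0 < n2)%N by apply: leq_trans mn2.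
have nR : (n%:R : R) != 0 by rewrite pnatr_eq0 -lt0n.
have n2R : (n2%:R : R) != 0 by rewrite pnatr_eq0 -lt0n.
have hb : d2%:R / n2%:R * rr' <= delta.
  have e : d2%:R / n2%:R * rr' = (d2 * k)%:R / (n * n2)%:R :> R.
    by rewrite /rr' !natrM; field; rewrite nR n2R.
  rewrite e /delta ler_pM2r ?invr_gt0 ?ltr0n ?muln_gt0 ?n_gt0 ?n2_gt0 // ler_nat.
  by apply: leq_trans qmin; rewrite leq_mul2l addn1 leqnSn orbT.
split => //.
  by rewrite /rr /rr' natrM natrB ?natrM ?(ltnW hk) //; field; rewrite nR n2R.
move=> h _ _ _ hh; apply: le_trans hb.
rewrite [rr' * h]mulrC; apply: ler_wpM2r => //.
by rewrite /rr' divr_ge0 ?ler0n.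
Qed.
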